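(* Let $G$ be a disk graph with parameter $r$ on a finite point set in the plane. For every two crossing edges of $G$, the four endpoints are pairwise at Euclidean distance at most $2r$; moreover, one of the four endpoints is within distance $r$ of each of the other three.
   Context: The disk graph on a point set $P$ with parameter $r$ is the geometric graph with vertex set $P$ having a straight-line edge between $p,q\in P$ iff $|pq|\le r$. Two line segments cross if they have a common point that is interior to both. *)

(* Defs.v *)
From Stdlib Require Import Reals List.
Import ListNotations.
Open Scope R_scope.

Definition point := (R * R)%type.

Definition edist (p q : point) : R :=
  sqrt ((fst p - fst q)^2 + (snd p - snd q)^2).

Definition disk_edge (P : list point) (r : R) (p q : point) : Prop :=
  In p P /\ In q P /\ p <> q /\ edist p q <= r.

Definition seg_interior (p q z : point) : Prop :=
  exists t : R, 0 < t < 1 /\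
    z = ((1 - t) * fst p + t * fst q, (1 - t) * snd p + t * snd q).

Definition segs_cross (p q s t : point) : Prop :=
  exists z : point, seg_interior p q z /\ seg_interior s t z.

(* Main.v *)
Require Import Defs.
From Stdlib Require Import Reals List Lra Psatz.
Import ListNotations.
Open Scope R_scope.

Lemma edist_nonneg x y : 0 <= edist x y.
Proof. unfold edist; apply sqrt_pos. Qed.

Lemma edist_sym x y : edist x y = edist y x.
Proof. unfold edist; f_equal; ring. Qed.

Lemma edist_refl x : edist x x = 0.
Proof. unfold edist. replace ((fst x - fst x)^2 + (snd x - snd x)^2) with 0 by ring.
  apply sqrt_0. Qed.

Lemma cs u1 u2 v1 v2 :
  u1*v1 + u2*v2 <= sqrt (u1^2+u2^2) * sqrt (v1^2+v2^2).
Proof.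
  rewrite <- sqrt_mult by nra.
  destruct (Rle_dec (u1*v1+u2*v2) 0) as [H|H].
  - pose proof (sqrt_pos ((u1 ^ 2 + u2 ^ 2) * (v1 ^ 2 + v2 ^ 2))). lra.
  - rewrite <- (sqrt_pow2 (u1*v1+u2*v2)) by lra.
    apply sqrt_le_1_alt.
    assert (0 <= (u1*v2-u2*v1)^2) by (apply pow2_ge_0).
    replace ((u1 ^ 2 + u2 ^ 2) * (v1 ^ 2 + v2 ^ 2)) with ((u1*v1+u2*v2)^2 + (u1*v2-u2*v1)^2) by ring.
    lra.
Qed.

Lemma edist_tri x y z : edist x z <= edist x y + edist y z.
Proof.
  unfold edist.
  set (u1 := fst x - fst y). set (u2 := snd x - snd y).
  set (v1 := fst y - fst z). set (v2 := snd y - snd z).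
  replace (fst x - fst z) with (u1+v1) by (unfold u1, v1; ring).
  replace (snd x - snd z) with (u2+v2) by (unfold u2, v2; ring).
  pose proof (sqrt_pos (u1^2+u2^2)). pose proof (sqrt_pos (v1^2+v2^2)).
  rewrite <- (sqrt_pow2 (sqrt (u1 ^ 2 + u2 ^ 2) + sqrt (v1 ^ 2 + v2 ^ 2))) by lra.
  apply sqrt_le_1_alt.
  pose proof (cs u1 u2 v1 v2).
  assert (sqrt (u1^2+u2^2) ^2 = u1^2+u2^2) by (apply pow2_sqrt; nra).
  assert (sqrt (v1^2+v2^2) ^2 = v1^2+v2^2) by (apply pow2_sqrt; nra).
  nra.
Qed.

Lemma edist_scale a x y x' y' : 0 <= a ->
  x' = a * x -> y' = a * y ->
  sqrt (x'^2 + y'^2) = a * sqrt (x^2+y^2).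
Proof.
  intros Ha -> ->.
  replace ((a*x)^2 + (a*y)^2) with (a^2 * (x^2+y^2)) by ring.
  rewrite sqrt_mult by nra. rewrite sqrt_pow2 by lra. reflexivity.
Qed.

Lemma seg_split p q z : seg_interior p q z -> edist p z + edist z q = edist p q.
Proof.
  intros [a [Ha ->]]. unfold edist; cbn [fst snd].
  rewrite (edist_scale a (fst p - fst q) (snd p - snd q)
    (fst p - ((1 - a) * fst p + a * fst q)) (snd p - ((1 - a) * snd p + a * snd q)));
    [| lra | ring | ring].
  rewrite (edist_scale (1-a) (fst p - fst q) (snd p - snd q)
    ((1 - a) * fst p + a * fst q - fst q) ((1 - a) * snd p + a * snd q - snd q));
    [| lra | ring | ring].
  ring.
Qed.

Theorem corollary2 (P : list point) (r : R) (p q s t : point) :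
  disk_edge P r p q -> disk_edge P r s t -> segs_cross p q s t ->
  (forall x y, In x [p; q; s; t] -> In y [p; q; s; t] -> edist x y <= 2 * r) /\
  (exists x, In x [p; q; s; t] /\
     forall y, In y [p; q; s; t] -> y <> x -> edist x y <= r).
Proof.
  intros (_ & _ & _ & Hpq) (_ & _ & _ & Hst) (z & Hz1 & Hz2).
  pose proof (seg_split _ _ _ Hz1) as E1.
  pose proof (seg_split _ _ _ Hz2) as E2.
  pose proof (edist_nonneg p z). pose proof (edist_nonneg z q).
  pose proof (edist_nonneg s z). pose proof (edist_nonneg z t).
  assert (Hw : forall w, In w [p; q; s; t] -> edist w z <= r).
  { intros w Hw; simpl in Hw.
    destruct Hw as [<-|[<-|[<-|[<-|[]]]]]; first [lra | rewrite edist_sym; lra]. }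
  assert (Hr : 0 <= r) by (pose proof (edist_nonneg p q); lra).
  split.
  { intros x y Hx Hy. pose proof (edist_tri x z y).
    rewrite (edist_sym z y) in H3. pose proof (Hw x Hx). pose proof (Hw y Hy). lra. }
  assert (A1 : edist p s + edist q t <= 2 * r).
  { pose proof (edist_tri p z s). pose proof (edist_tri q z t).
    rewrite (edist_sym q z) in H4. rewrite (edist_sym z s) in H3. lra. }
  assert (A2 : edist p t + edist q s <= 2 * r).
  { pose proof (edist_tri p z t) as K1. pose proof (edist_tri q z s) as K2.
    rewrite (edist_sym q z), (edist_sym z s) in K2. lra. }
  assert (G : forall x, In x [p; q; s; t] ->
      (forall y, In y [p; q; s; t] -> edist x y <= r) ->
      exists x, In x [p; q; s; t] /\
        forall y, In y [p; q; s; t] -> y <> x -> edist x y <= r).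
  { intros x Hx Hy. exists x. split; auto. }
  assert (Spq : edist q p <= r) by (rewrite edist_sym; lra).
  assert (Sst : edist t s <= r) by (rewrite edist_sym; lra).
  rewrite (edist_sym q s) in A2.
  rewrite (edist_sym q t) in A1.
  destruct (Rle_dec (edist p s) r); destruct (Rle_dec (edist p t) r);
  destruct (Rle_dec (edist s q) r); destruct (Rle_dec (edist t q) r);
  first
   [ apply (G p); [simpl; tauto|];
     intros y Hy; simpl in Hy; destruct Hy as [<-|[<-|[<-|[<-|[]]]]];
     rewrite ?edist_refl; (lra || (rewrite edist_sym; lra))
   | apply (G q); [simpl; tauto|];
     intros y Hy; simpl in Hy; destruct Hy as [<-|[<-|[<-|[<-|[]]]]];
     rewrite ?edist_refl; (lra || (rewrite edist_sym; lra))
   | apply (G s); [simpl; tauto|];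
     intros y Hy; simpl in Hy; destruct Hy as [<-|[<-|[<-|[<-|[]]]]];
     rewrite ?edist_refl; (lra || (rewrite edist_sym; lra))
   | apply (G t); [simpl; tauto|];
     intros y Hy; simpl in Hy; destruct Hy as [<-|[<-|[<-|[<-|[]]]]];
     rewrite ?edist_refl; (lra || (rewrite edist_sym; lra))
   | exfalso; lra ].
Qed.
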